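(* Let $\mathcal M=(\mathbf M^{(\lambda)})_{\lambda>0}$ be a weight matrix on $\mathbb N_0^d$. (i) If for every $\lambda>0$ there exist $\kappa\ge\lambda$ and $A\ge1$ with $M^{(\lambda)}_{\alpha+e_j}\le A^{|\alpha|+1}M^{(\kappa)}_\alpha$ for all $\alpha\in\mathbb N_0^d$, $1\le j\le d$, then for every $\lambda>0$ there exist $\kappa\ge\lambda$ and $B_1,B_2\ge1$ such that for all $t\in\mathbb R^d$ $$(1+|t|)^{2(d+1)}\exp\omega_{\mathbf M^{(\kappa)}}(t)\le B_1\exp\omega_{\mathbf M^{(\lambda)}}(B_2t).$$ (ii) If for every $\lambda>0$ there exist $0<\kappa\le\lambda$ and $A\ge1$ with $M^{(\kappa)}_{\alpha+e_j}\le A^{|\alpha|+1}M^{(\lambda)}_\alpha$ for all $\alpha\in\mathbb N_0^d$, $1\le j\le d$, then for every $\lambda>0$ there exist $0<\kappa\le\lambda$ and $B_1,B_2\ge1$ such that for all $t\in\mathbb R^d$ $$(1+|t|)^{2(d+1)}\exp\omega_{\mathbf M^{(\lambda)}}(t)\le B_1\exp\omega_{\mathbf M^{(\kappa)}}(B_2t).$$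
   Context: A weight matrix is a family $\mathcal M=(\mathbf M^{(\lambda)})_{\lambda>0}$ with $\mathbf M^{(\lambda)}=(M^{(\lambda)}_\alpha)_{\alpha\in\mathbb N_0^d}$ sequences of positive reals, $M^{(\lambda)}_0=1$, and $M^{(\lambda)}_\alpha\le M^{(\kappa)}_\alpha$ for all $\alpha$ whenever $0<\lambda\le\kappa$. $e_j$ is the $j$-th unit vector, $|\alpha|=\sum\alpha_j$, $|t|$ the Euclidean norm. The associated weight function of $\mathbf M=(M_\alpha)$ is $\omega_{\mathbf M}(t)=\sup_{\alpha\in\mathbb N^d_{0,t}}\log\frac{|t^\alpha|}{M_\alpha}$ ($t\in\mathbb R^d$, possibly $+\infty$), where $\mathbb N^d_{0,t}=\{\alpha:\alpha_j=0\text{ whenever }t_j=0\}$ and $0^0:=1$. *)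

(* Defs.v *)
From HB Require Import structures.
From mathcomp Require Import all_boot all_order all_algebra.
From mathcomp Require Import all_classical all_reals all_analysis.
Set Implicit Arguments. Unset Strict Implicit. Unset Printing Implicit Defensive.
Import Order.TTheory GRing.Theory Num.Theory.
Local Open Scope ring_scope.
Local Open Scope classical_set_scope.

Definition mindex (d : nat) := 'I_d -> nat.

Definition mlen (d : nat) (a : mindex d) : nat := (\sum_(i < d) a i)%N.

Definition maddunit (d : nat) (a : mindex d) (j : 'I_d) : mindex d :=
  fun i => (a i + (i == j))%N.

Definition mzero (d : nat) : mindex d := fun _ => 0%N.

(* t^alpha = prod_j t_j^{alpha_j}, with 0^0 = 1 *)
Definition mpow (R : realType) (d : nat) (t : 'I_d -> R) (a : mindex d) : R :=
  \prod_(i < d) t i ^+ a i.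

Definition enorm (R : realType) (d : nat) (t : 'I_d -> R) : R :=
  Num.sqrt (\sum_(i < d) t i ^+ 2).

Definition Nd0 (R : realType) (d : nat) (t : 'I_d -> R) : set (mindex d) :=
  [set a | forall j, t j = 0 -> a j = 0%N].

Definition omegaM (R : realType) (d : nat) (M : mindex d -> R) (t : 'I_d -> R)
  : \bar R :=
  ereal_sup [set (ln (`|mpow t a| / M a))%:E | a in Nd0 t].

(* Represented as a
   function R -> mindex d -> R whose values at lambda <= 0 are irrelevant. *)
Definition weight_matrix (R : realType) (d : nat) (M : R -> mindex d -> R) : Prop :=
  [/\ forall lam a, 0 < lam -> 0 < M lam a,
      forall lam, 0 < lam -> M lam (@mzero d) = 1
    & forall lam kap a, 0 < lam -> lam <= kap -> M lam a <= M kap a].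

(* Main.v *)
Require Import Defs.
From HB Require Import structures.
From mathcomp Require Import all_boot all_order all_algebra.
From mathcomp Require Import all_classical all_reals all_analysis.
From mathcomp Require Import lra.
Import Order.TTheory GRing.Theory Num.Theory.
Set Implicit Arguments. Unset Strict Implicit. Unset Printing Implicit Defensive.
Local Open Scope ring_scope.

Definition shiftN (d : nat) (a : mindex d) (j : 'I_d) (n : nat) : mindex d :=
  fun i => (a i + (i == j) * n)%N.

Lemma shiftN_S d (a : mindex d) j n : shiftN a j n.+1 = maddunit (shiftN a j n) j.
Proof.
apply: funext => i; rewrite /shiftN /maddunit.
by case: (i == j) => /=; rewrite ?mul1n ?mul0n ?addn0 // addnS addn1.
Qed.

Lemma mlen_shiftN d (a : mindex d) j n : mlen (shiftN a j n) = (mlen a + n)%N.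
Proof.
rewrite /mlen /shiftN big_split /=; congr (_ + _)%N.
rewrite (bigD1 j) //= eqxx mul1n big1 ?addn0 // => i /negbTE ->; by rewrite mul0n.
Qed.

Lemma mlen_maddunit d (a : mindex d) j : mlen (maddunit a j) = (mlen a).+1.
Proof.
have -> : maddunit a j = shiftN a j 1.
  by apply: funext => i; rewrite /shiftN /maddunit muln1.
by rewrite mlen_shiftN addn1.
Qed.

Lemma mpow_shiftN (R : realType) d (t : 'I_d -> R) (a : mindex d) j n :
  mpow t (shiftN a j n) = mpow t a * t j ^+ n.
Proof.
rewrite /mpow /shiftN.
under eq_bigr do rewrite exprD.
rewrite big_split /=; congr (_ * _).
rewrite (bigD1 j) //= eqxx mul1n big1 ?mulr1 // => i /negbTE ->; by rewrite mul0n expr0.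
Qed.

Lemma mpow_scale (R : realType) d (t : 'I_d -> R) (a : mindex d) (c : R) :
  mpow (fun i => c * t i) a = c ^+ mlen a * mpow t a.
Proof.
rewrite /mpow /mlen.
under eq_bigr do rewrite exprMn.
by rewrite big_split /= prodrXr.
Qed.

Lemma Nd0_scale (R : realType) d (t : 'I_d -> R) (c : R) :
  c != 0 -> Nd0 (fun i => c * t i) = Nd0 t.
Proof.
move=> c0; apply: funext => a; apply: propext; rewrite /Nd0 /=; split => H j tj.
  by apply: H; rewrite tj mulr0.
by apply: H; move/eqP: tj; rewrite mulf_eq0 (negbTE c0) /= => /eqP.
Qed.

Lemma mpow_gt0 (R : realType) d (t : 'I_d -> R) (a : mindex d) :
  Nd0 t a -> 0 < `|mpow t a|.
Proof.
move=> Ha; rewrite normr_gt0; apply/prodf_neq0 => i _.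
have [ti0|ti0] := eqVneq (t i) 0.
  by rewrite (Ha i ti0) expr0 oner_neq0.
by rewrite expf_neq0.
Qed.

Lemma enorm_le (R : realType) d (t : 'I_d -> R) (K : R) :
  0 <= K -> (forall i, `|t i| <= K) -> enorm t <= d%:R * K.
Proof.
move=> K0 HK; rewrite /enorm.
have H1 : \sum_(i < d) t i ^+ 2 <= (d%:R * K) ^+ 2.
  apply: (@le_trans _ _ (\sum_(i < d) K ^+ 2)).
    apply: ler_sum => i _; rewrite -real_normK ?num_real //.
    by apply: lerXn2r; rewrite ?nnegrE.
  rewrite sumr_const card_ord -[K ^+ 2 *+ d]mulr_natr exprMn [_ * K ^+ 2]mulrC.
  apply: (ler_wpM2l (sqr_ge0 K)).
  rewrite -natrX ler_nat; case: d {t HK} => // n.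
  by rewrite expnS leq_pmulr.
apply: (le_trans (ler_wsqrtr H1)).
by rewrite sqrtr_sqr ger0_norm // mulr_ge0.
Qed.

Lemma core_real (R : realType) d (M1 M2 : mindex d -> R) (B2 : R)
  (t : 'I_d -> R) (a : mindex d) :
  (forall b, 0 < M2 b) -> (forall b, M2 b <= M1 b) -> 1 <= B2 ->
  (forall b j, M2 (shiftN b j (2 * d.+1)) <= B2 ^+ (mlen b + 2 * d.+1) * M1 b) ->
  Nd0 t a -> exists2 b, Nd0 t b &
    (1 + enorm t) ^+ (2 * d.+1) * (`|mpow t a| / M1 a) <=
    (d.+1%:R) ^+ (2 * d.+1) * (`|mpow (fun i => B2 * t i) b| / M2 b).
Proof.
set N := (2 * d.+1)%N.
move=> M2pos M21 B21 Hs Ha.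
have M1pos b : 0 < M1 b by apply: lt_le_trans (M2pos b) (M21 b).
have B20 : 0 < B2 by apply: lt_le_trans B21.
have ta := mpow_gt0 Ha.
case: (pselect (forall i, `|t i| <= 1)) => [Hle|Hgt].
  exists a => //.
  have hn : enorm t <= d%:R by rewrite -[d%:R]mulr1; apply: enorm_le.
  have en0 : 0 <= enorm t by apply: sqrtr_ge0.
  apply: ler_pM.
  - by apply: exprn_ge0; lra.
  - by apply: divr_ge0; [exact: ltW | exact: ltW].
  - apply: lerXn2r; rewrite ?nnegrE; try lra.
  rewrite mpow_scale normrM normrX (ger0_norm (ltW B20)).
  apply: ler_pM.
  - exact: ltW.
  - by rewrite invr_ge0 ltW.
  - by rewrite ler_peMl ?exprn_ege1 // ltW.
  by rewrite lef_pV2 ?posrE.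
move: Hgt => /existsNP [i /negP]; rewrite -ltNge => Hi.
have [j Hj] : exists j, forall k, `|t k| <= `|t j|.
  by case: (arg_maxP (fun k => `|t k|) (isT : predT i)) => j _ H; exists j => k; exact: H.
have tj1 : 1 < `|t j| by apply: lt_le_trans Hi (Hj i).
have tj0 : t j != 0 by rewrite -normr_gt0; apply: lt_trans tj1.
exists (shiftN a j N).
  move=> k tk; rewrite /shiftN (Ha k tk).
  have -> : (k == j) = false by apply/eqP => kj; move: tj0; rewrite -kj tk eqxx.
  by [].
have hn : enorm t <= d%:R * `|t j| by apply: enorm_le.
have en0 : 0 <= enorm t by apply: sqrtr_ge0.
have H1 : (1 + enorm t) ^+ N <= d.+1%:R ^+ N * `|t j| ^+ N.
  rewrite -exprMn; apply: lerXn2r; rewrite ?nnegrE; try lra.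
rewrite mpow_scale mpow_shiftN mlen_shiftN -/N.
rewrite normrM normrX (ger0_norm (ltW B20)) normrM normrX.
apply: (le_trans (ler_wpM2r _ H1)).
  by apply: divr_ge0; [exact: normr_ge0 | exact: ltW].
rewrite -!mulrA; apply: ler_wpM2l; first by apply: exprn_ge0; exact: ler0n.
rewrite [B2 ^+ _ * _]mulrC -!mulrA [`|t j| ^+ N * _]mulrC -!mulrA.
apply: ler_wpM2l; first exact: normr_ge0.
rewrite [`|t j| ^+ N * _]mulrC; apply: ler_wpM2r; first by apply: exprn_ge0.
rewrite mulrC ler_pdivlMr // mulrC ler_pdivrMr //.
Qed.

Lemma core_ereal (R : realType) d (M1 M2 : mindex d -> R) (B2 : R)
  (t : 'I_d -> R) :
  (forall b, 0 < M2 b) -> (forall b, M2 b <= M1 b) -> 1 <= B2 ->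
  (forall b j, M2 (shiftN b j (2 * d.+1)) <= B2 ^+ (mlen b + 2 * d.+1) * M1 b) ->
  (((1 + enorm t) ^+ (2 * d.+1))%:E * expeR (omegaM M1 t)
   <= ((d.+1%:R) ^+ (2 * d.+1))%:E * expeR (omegaM M2 (fun i => (B2 * t i)%R)))%E.
Proof.
set N := (2 * d.+1)%N.
move=> M2pos M21 B21 Hs.
have M1pos b : 0 < M1 b by apply: lt_le_trans (M2pos b) (M21 b).
have B20 : 0 < B2 by apply: lt_le_trans B21.
have en0 : 0 <= enorm t by apply: sqrtr_ge0.
set c := (1 + enorm t) ^+ N.
set B1 := (d.+1%:R : R) ^+ N.
have c0 : 0 < c by apply: exprn_gt0; lra.
have B10 : 0 < B1 by apply: exprn_gt0; apply: ltr0Sn.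
have key : (omegaM M1 t <= (ln (B1 / c))%:E + omegaM M2 (fun i => (B2 * t i)%R))%E.
  apply: ge_ereal_sup => _ [a Ha <-].
  have [b Hb Hab] := core_real M2pos M21 B21 Hs Ha.
  have ta := mpow_gt0 Ha.
  have Hb' : Nd0 (fun i => (B2 * t i)%R) b.
    by rewrite Nd0_scale // gt_eqF.
  have tb := mpow_gt0 Hb'.
  apply: (@le_trans _ _ ((ln (B1 / c))%:E + (ln (`|mpow (fun i => (B2 * t i)%R) b| / M2 b))%:E)%E).
    rewrite -EFinD lee_fin -lnM ?posrE ?divr_gt0 //.
    have ic : 0 < c^-1 by rewrite invr_gt0.
    have im : 0 < (M2 b)^-1 by rewrite invr_gt0.
    rewrite ler_ln ?posrE ?divr_gt0 ?mulr_gt0 //.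
    by rewrite mulrAC ler_pdivlMr // mulrC.
  apply: (leeD2l (ln (B1 / c))%:E); apply: ereal_sup_ubound; exists b => //.
apply: (@le_trans _ _ (c%:E * expeR ((ln (B1 / c))%:E + omegaM M2 (fun i => (B2 * t i)%R)))%E).
  apply: lee_pmul; [by rewrite lee_fin ltW | exact: expeR_ge0 | by [] | ].
  by rewrite lee_expeR.
rewrite expeRD /= muleA -EFinM lnK ?posrE ?divr_gt0 //.
by rewrite mulrC divfK ?gt_eqF.
Qed.

Lemma shiftN0 d (a : mindex d) j : shiftN a j 0 = a.
Proof. by apply: funext => i; rewrite /shiftN muln0 addn0. Qed.

Lemma exp_bound (R : realType) (A1 A2 : R) (L n : nat) :
  1 <= A1 -> 1 <= A2 ->
  A1 ^+ (L + n).+1 * A2 ^+ (n * (L + n)) <= (Num.max A1 A2) ^+ (n.+1 * (L + n.+1)).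
Proof.
move=> h1 h2.
have hm1 : 1 <= Num.max A1 A2 by rewrite le_max h1.
apply: (@le_trans _ _ (Num.max A1 A2 ^+ (L + n).+1 * Num.max A1 A2 ^+ (n * (L + n)))).
  apply: ler_pM; rewrite ?exprn_ge0 //; try lra.
    by apply: lerXn2r; rewrite ?nnegrE ?le_max ?lexx //; lra.
  by apply: lerXn2r; rewrite ?nnegrE ?le_max ?lexx ?orbT //; lra.
rewrite -exprD; apply: ler_weXn2l => //.
rewrite !mulSn !mulnDr mulnS addnS; apply: leq_add => //. by rewrite leq_add2l leq_addl.
Qed.

Lemma iterI (R : realType) d (M : R -> mindex d -> R) :
  weight_matrix M ->
  (forall lam, 0 < lam -> exists kap A : R, lam <= kap /\ 1 <= A /\
      forall (a : mindex d) (j : 'I_d),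
        M lam (maddunit a j) <= A ^+ (mlen a).+1 * M kap a) ->
  forall n lam, 0 < lam -> exists kap A : R, lam <= kap /\ 1 <= A /\
      forall (a : mindex d) (j : 'I_d),
        M lam (shiftN a j n) <= A ^+ (n * (mlen a + n)) * M kap a.
Proof.
move=> [Mpos M0 Mmon] Hst; elim=> [|n IH] lam lam0.
  exists lam, 1; split => //; split => // a j.
  by rewrite shiftN0 expr1n mul1r.
have [lam' [A1 [l1 [A11 H1]]]] := Hst lam lam0.
have lam'0 : 0 < lam' by apply: lt_le_trans l1.
have [kap [A2 [l2 [A21 H2]]]] := IH lam' lam'0.
exists kap, (Num.max A1 A2); split; first exact: le_trans l2.
split; first by rewrite le_max A11.
move=> a j; rewrite shiftN_S.
apply: (le_trans (H1 _ _)); rewrite mlen_shiftN.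
apply: (@le_trans _ _ (A1 ^+ (mlen a + n).+1 * (A2 ^+ (n * (mlen a + n)) * M kap a))).
  apply: ler_wpM2l; first by apply: exprn_ge0; lra.
  exact: H2.
rewrite mulrA; apply: ler_wpM2r; first by apply: ltW; apply: Mpos; apply: lt_le_trans l2.
exact: exp_bound.
Qed.

Lemma iterII (R : realType) d (M : R -> mindex d -> R) :
  weight_matrix M ->
  (forall lam, 0 < lam -> exists kap A : R, 0 < kap /\ kap <= lam /\ 1 <= A /\
      forall (a : mindex d) (j : 'I_d),
        M kap (maddunit a j) <= A ^+ (mlen a).+1 * M lam a) ->
  forall n lam, 0 < lam -> exists kap A : R, 0 < kap /\ kap <= lam /\ 1 <= A /\
      forall (a : mindex d) (j : 'I_d),
        M kap (shiftN a j n) <= A ^+ (n * (mlen a + n)) * M lam a.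
Proof.
move=> [Mpos M0 Mmon] Hst; elim=> [|n IH] lam lam0.
  exists lam, 1; split => //; split => //; split => // a j.
  by rewrite shiftN0 expr1n mul1r.
have [kap1 [A2 [k10 [l2 [A21 H2]]]]] := IH lam lam0.
have [kap [A1 [k0 [l1 [A11 H1]]]]] := Hst kap1 k10.
exists kap, (Num.max A1 A2); split => //; split; first exact: le_trans l2.
split; first by rewrite le_max A11.
move=> a j; rewrite shiftN_S.
apply: (le_trans (H1 _ _)); rewrite mlen_shiftN.
apply: (@le_trans _ _ (A1 ^+ (mlen a + n).+1 * (A2 ^+ (n * (mlen a + n)) * M lam a))).
  apply: ler_wpM2l; first by apply: exprn_ge0; lra.
  exact: H2.
rewrite mulrA; apply: ler_wpM2r; first by apply: ltW; apply: Mpos.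
exact: exp_bound.
Qed.

Unset Implicit Arguments.

Theorem lemma3p2 (R : realType) (d : nat) (M : R -> mindex d -> R) :
  weight_matrix M ->
  ((forall lam, 0 < lam -> exists kap A : R, lam <= kap /\ 1 <= A /\
      forall (a : mindex d) (j : 'I_d),
        M lam (maddunit a j) <= A ^+ (mlen a).+1 * M kap a) ->
   forall lam, 0 < lam -> exists kap B1 B2 : R, lam <= kap /\ 1 <= B1 /\ 1 <= B2 /\
      forall t : 'I_d -> R,
        (((1 + enorm t) ^+ (2 * d.+1))%:E * expeR (omegaM (M kap) t)
          <= B1%:E * expeR (omegaM (M lam) (fun i => (B2 * t i)%R)))%E)
  /\
  ((forall lam, 0 < lam -> exists kap A : R, 0 < kap /\ kap <= lam /\ 1 <= A /\
      forall (a : mindex d) (j : 'I_d),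
        M kap (maddunit a j) <= A ^+ (mlen a).+1 * M lam a) ->
   forall lam, 0 < lam -> exists kap B1 B2 : R, 0 < kap /\ kap <= lam /\ 1 <= B1 /\ 1 <= B2 /\
      forall t : 'I_d -> R,
        (((1 + enorm t) ^+ (2 * d.+1))%:E * expeR (omegaM (M lam) t)
          <= B1%:E * expeR (omegaM (M kap) (fun i => (B2 * t i)%R)))%E).
Proof.
move=> WM; have [Mpos M0 Mmon] := WM.
have B1ge : 1 <= (d.+1%:R : R) ^+ (2 * d.+1) by apply: exprn_ege1; rewrite ler1n.
split.
  move=> Hst lam lam0.
  have [kap [A [lk [A1 H]]]] := iterI WM Hst (2 * d.+1) lam0.
  exists kap, ((d.+1%:R : R) ^+ (2 * d.+1)), (A ^+ (2 * d.+1)).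
  split => //; split => //; split; first exact: exprn_ege1.
  move=> t; apply: core_ereal.
  - by move=> b; apply: Mpos.
  - by move=> b; apply: Mmon.
  - exact: exprn_ege1.
  by move=> b j; rewrite -exprM; apply: H.
move=> Hst lam lam0.
have [kap [A [k0 [lk [A1 H]]]]] := iterII WM Hst (2 * d.+1) lam0.
exists kap, ((d.+1%:R : R) ^+ (2 * d.+1)), (A ^+ (2 * d.+1)).
split => //; split => //; split => //; split; first exact: exprn_ege1.
move=> t; apply: core_ereal.
- by move=> b; apply: Mpos.
- by move=> b; apply: Mmon.
- exact: exprn_ege1.
by move=> b j; rewrite -exprM; apply: H.
Qed.
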